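(* Let $\lambda$ be a non-discrete Hausdorff linear group topology on $\mathbb{Z}$. Then there exists a metrizable locally quasi-convex Hausdorff group topology $\tau$ on $\mathbb{Z}$ which is strictly finer than $\lambda$ and satisfies $(\mathbb{Z},\tau)^\wedge=(\mathbb{Z},\lambda)^\wedge$. Consequently $\lambda$ is not the Mackey topology; in particular, for every prime $p$ the $p$-adic topology on $\mathbb{Z}$ (with neighborhood basis $\{p^n\mathbb{Z}\}_{n\in\mathbb{N}_0}$ at $0$) is not a Mackey topology.
   Context: $\mathbb{T}=\mathbb{R}/\mathbb{Z}$, $\mathbb{T}_+=[-\frac14,\frac14]+\mathbb{Z}$. For a topological abelian group $G$, $G^\wedge$ is the group of continuous homomorphisms $G\to\mathbb{T}$. A group topology is linear if it has a neighborhood basis at $0$ of subgroups. For $A\subseteq G$, $A^\triangleright=\{\chi\in G^\wedge:\chi(A)\subseteq\mathbb{T}_+\}$; for $B\subseteq G^\wedge$, $B^\triangleleft=\{x\in G:\chi(x)\in\mathbb{T}_+\ \forall\chi\in B\}$; $A$ is quasi-convex if $A=(A^\triangleright)^\triangleleft$; $G$ is locally quasi-convex if it has a neighborhood basis at $0$ of quasi-convex sets. Two locally quasi-convex group topologies on the same group are compatible if they have the same continuous characters. A locally quasi-convex group topology $\lambda$ on $G$ is the Mackey topology if it is the finest locally quasi-convex group topology on $G$ compatible with $\lambda$. *)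

(* Defs.v *)
From Stdlib Require Import ZArith Reals Znumtheory.
Open Scope R_scope.

Definition topZ := (Z -> Prop) -> Prop.

Definition is_topology (t : topZ) : Prop :=
  t (fun _ => True) /\
  (forall (I : Type) (F : I -> Z -> Prop), (forall i, t (F i)) ->
      t (fun x => exists i, F i x)) /\
  (forall U V, t U -> t V -> t (fun x => U x /\ V x)).

Definition is_group_topology (t : topZ) : Prop :=
  is_topology t /\
  forall x y W, t W -> W (x - y)%Z ->
    exists U V, t U /\ t V /\ U x /\ V y /\
      forall u v, U u -> V v -> W (u - v)%Z.

Definition nbhd (t : topZ) (U : Z -> Prop) (x : Z) : Prop :=
  exists V, t V /\ V x /\ forall y, V y -> U y.

Definition hausdorff (t : topZ) : Prop :=
  forall x y, x <> y -> exists U V, t U /\ t V /\ U x /\ V y /\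
    forall z, U z -> V z -> False.

Definition non_discrete (t : topZ) : Prop := ~ t (fun x => x = 0%Z).

Definition subgroupZ (H : Z -> Prop) : Prop :=
  H 0%Z /\ forall x y, H x -> H y -> H (x - y)%Z.

Definition linear_top (t : topZ) : Prop :=
  forall U, nbhd t U 0%Z ->
    exists H, subgroupZ H /\ nbhd t H 0%Z /\ forall x, H x -> U x.

Definition metrizable (t : topZ) : Prop :=
  exists d : Z -> Z -> R,
    (forall x y, 0 <= d x y) /\ (forall x y, d x y = 0 <-> x = y) /\
    (forall x y, d x y = d y x) /\ (forall x y z, d x z <= d x y + d y z) /\
    (forall U, t U <-> forall x, U x -> exists eps, eps > 0 /\
        forall y, d x y < eps -> U y).

(* T = R/Z : a map Z -> T is represented by a map Z -> R, modulo Z-valued maps *)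
Definition hom_to_T (f : Z -> R) : Prop :=
  forall m n, exists k : Z, f (m + n)%Z - f m - f n = IZR k.

Definition cont_to_T (t : topZ) (f : Z -> R) : Prop :=
  forall x eps, eps > 0 -> exists U, t U /\ U x /\
    forall y, U y -> exists k : Z, Rabs (f y - f x - IZR k) < eps.

Definition character (t : topZ) (f : Z -> R) : Prop :=
  hom_to_T f /\ cont_to_T t f.

Definition in_Tplus (a : R) : Prop := exists k : Z, Rabs (a - IZR k) <= / 4.

Definition polar (t : topZ) (A : Z -> Prop) (f : Z -> R) : Prop :=
  character t f /\ forall a, A a -> in_Tplus (f a).

Definition prepolar (B : (Z -> R) -> Prop) (x : Z) : Prop :=
  forall f, B f -> in_Tplus (f x).

Definition quasi_convex (t : topZ) (A : Z -> Prop) : Prop :=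
  forall x, A x <-> prepolar (polar t A) x.

Definition loc_quasi_convex (t : topZ) : Prop :=
  forall U, nbhd t U 0%Z ->
    exists Q, quasi_convex t Q /\ nbhd t Q 0%Z /\ forall x, Q x -> U x.

Definition lqc_group_topology (t : topZ) : Prop :=
  is_group_topology t /\ loc_quasi_convex t.

Definition same_dual (t1 t2 : topZ) : Prop :=
  forall f, character t1 f <-> character t2 f.

Definition compatible (t1 t2 : topZ) : Prop :=
  lqc_group_topology t1 /\ lqc_group_topology t2 /\ same_dual t1 t2.

Definition finer (t1 t2 : topZ) : Prop := forall U, t2 U -> t1 U.

Definition strictly_finer (t1 t2 : topZ) : Prop :=
  finer t1 t2 /\ exists U, t1 U /\ ~ t2 U.

Definition mackey (l : topZ) : Prop :=
  lqc_group_topology l /\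
  forall t, compatible t l -> finer l t.

Definition padic_top (p : Z) : topZ :=
  fun U => forall x, U x -> exists n : nat,
    forall k : Z, U (x + k * p ^ Z.of_nat n)%Z.

(* Main.v *)
Require Import Defs.
From Stdlib Require Import ZArith Reals Znumtheory Lia Lra Classical ClassicalEpsilon FunctionalExtensionality PropExtensionality.

Open Scope R_scope.

Definition isZ (x : R) : Prop := exists k : Z, x = IZR k.
Definition fl (x : R) : Z := (up x - 1)%Z.
Definition nrm (x : R) : R := Rmin (x - IZR (fl x)) (IZR (fl x) + 1 - x).

Lemma fl_spec x : IZR (fl x) <= x < IZR (fl x) + 1.
Proof. unfold fl. rewrite minus_IZR. destruct (archimed x). simpl. lra. Qed.

Lemma IZR_abs_lt1 a : Rabs (IZR a) < 1 -> a = 0%Z.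
Proof. intro H. rewrite Rabs_Zabs in H. apply lt_IZR in H. lia. Qed.

Lemma nrm_ge0 x : 0 <= nrm x.
Proof. unfold nrm. destruct (fl_spec x). unfold Rmin; destruct Rle_dec; lra. Qed.

Lemma nrm_le x k : nrm x <= Rabs (x - IZR k).
Proof.
  unfold nrm. destruct (fl_spec x) as [H1 H2].
  destruct (Z_le_gt_dec k (fl x)) as [Hk|Hk].
  - apply IZR_le in Hk. eapply Rle_trans. apply Rmin_l.
    rewrite Rabs_right by lra. lra.
  - assert (IZR (fl x) + 1 <= IZR k).
    { rewrite <- plus_IZR. apply IZR_le. lia. }
    eapply Rle_trans. apply Rmin_r. rewrite Rabs_left1 by lra. lra.
Qed.

Lemma nrm_att x : exists k, Rabs (x - IZR k) = nrm x.
Proof.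
  unfold nrm. destruct (fl_spec x) as [H1 H2]. unfold Rmin. destruct Rle_dec.
  - exists (fl x). rewrite Rabs_right; lra.
  - exists (fl x + 1)%Z. rewrite plus_IZR. rewrite Rabs_left1; simpl; lra.
Qed.

Lemma nrm_ltP x b : nrm x < b <-> exists k, Rabs (x - IZR k) < b.
Proof.
  split.
  - intro H. destruct (nrm_att x) as [k Hk]. exists k. lra.
  - intros [k Hk]. pose proof (nrm_le x k). lra.
Qed.

Lemma nrm_leP x b : nrm x <= b <-> exists k, Rabs (x - IZR k) <= b.
Proof.
  split.
  - intro H. destruct (nrm_att x) as [k Hk]. exists k. lra.
  - intros [k Hk]. pose proof (nrm_le x k). lra.
Qed.

Lemma nrm_Tplus x : in_Tplus x <-> nrm x <= / 4.
Proof. unfold in_Tplus. rewrite nrm_leP. tauto. Qed.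

Lemma nrm_shift x z : isZ z -> nrm (x + z) = nrm x.
Proof.
  intros [kz ->]. apply Rle_antisym.
  - destruct (nrm_att x) as [k Hk]. rewrite <- Hk.
    replace (x - IZR k) with (x + IZR kz - IZR (k + kz)) by (rewrite plus_IZR; ring).
    apply nrm_le.
  - destruct (nrm_att (x + IZR kz)) as [k Hk]. rewrite <- Hk.
    replace (x + IZR kz - IZR k) with (x - IZR (k - kz)) by (rewrite minus_IZR; ring).
    apply nrm_le.
Qed.

Lemma nrm_shift' x z : isZ z -> nrm (x - z) = nrm x.
Proof. intros [k ->]. unfold Rminus. rewrite <- opp_IZR. apply nrm_shift. eexists; eauto. Qed.

Lemma nrm_opp x : nrm (- x) = nrm x.
Proof.
  apply Rle_antisym.
  - destruct (nrm_att x) as [k Hk]. rewrite <- Hk.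
    replace (Rabs (x - IZR k)) with (Rabs (- x - IZR (- k))).
    apply nrm_le. rewrite opp_IZR. rewrite <- Rabs_Ropp. f_equal; ring.
  - destruct (nrm_att (-x)) as [k Hk]. rewrite <- Hk.
    replace (Rabs (-x - IZR k)) with (Rabs (x - IZR (- k))).
    apply nrm_le. rewrite opp_IZR. rewrite <- Rabs_Ropp. f_equal; ring.
Qed.

Lemma nrm_add x y : nrm (x + y) <= nrm x + nrm y.
Proof.
  destruct (nrm_att x) as [k Hk]. destruct (nrm_att y) as [l Hl].
  rewrite <- Hk, <- Hl. eapply Rle_trans. apply (nrm_le _ (k + l)).
  rewrite plus_IZR. replace (x + y - (IZR k + IZR l)) with ((x - IZR k) + (y - IZR l)) by ring.
  apply Rabs_triang.
Qed.

Lemma nrm_abs x : nrm x <= Rabs x.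
Proof. pose proof (nrm_le x 0). rewrite Rminus_0_r in H. exact H. Qed.

Lemma nrm_small x : Rabs x <= / 2 -> nrm x = Rabs x.
Proof.
  intro H. apply Rle_antisym. apply nrm_abs.
  destruct (nrm_att x) as [k Hk]. rewrite <- Hk.
  destruct (Z.eq_dec k 0) as [->|Hk0].
  - rewrite Rminus_0_r. lra.
  - assert (1 <= Rabs (IZR k)). { rewrite Rabs_Zabs. apply IZR_le. lia. }
    pose proof (Rabs_triang_inv (IZR k) x).
    replace (Rabs (x - IZR k)) with (Rabs (IZR k - x)) by (rewrite <- Rabs_Ropp; f_equal; ring). lra.
Qed.

Lemma nrm_Z z : nrm (IZR z) = 0.
Proof. apply Rle_antisym. pose proof (nrm_le (IZR z) z). rewrite Rminus_diag, Rabs_R0 in H. auto. apply nrm_ge0. Qed.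

Lemma nrm_isZ x : isZ x -> nrm x = 0.
Proof. intros [k ->]. apply nrm_Z. Qed.

Lemma nrm_zero x : nrm x = 0 -> isZ x.
Proof.
  intro H. destruct (nrm_att x) as [k Hk]. exists k. rewrite H in Hk.
  destruct (Rcase_abs (x - IZR k)); [rewrite Rabs_left in Hk|rewrite Rabs_right in Hk]; lra.
Qed.

Lemma nrm_half x : nrm x <= / 2.
Proof. unfold nrm. destruct (fl_spec x). unfold Rmin; destruct Rle_dec; lra. Qed.

Lemma nrm_double x : nrm x <= / 4 -> nrm (2 * x) = 2 * nrm x.
Proof.
  intro H. destruct (nrm_att x) as [k Hk].
  replace (2 * x) with (2 * (x - IZR k) + IZR (2 * k)) by (rewrite mult_IZR; simpl; ring).
  rewrite nrm_shift by (eexists; eauto).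
  rewrite nrm_small; rewrite Rabs_mult, Rabs_right by lra; lra.
Qed.

Lemma nrm_pow2 k x : nrm (2 ^ k * x) <= 2 ^ k * nrm x.
Proof.
  induction k; simpl. rewrite !Rmult_1_l; lra.
  replace (2 * 2 ^ k * x) with (2 ^ k * x + 2 ^ k * x) by ring.
  eapply Rle_trans. apply nrm_add. lra.
Qed.

Lemma doubling K : forall x, (forall k, (k <= K)%nat -> nrm (2 ^ k * x) <= / 4) ->
  nrm x <= / 4 * / 2 ^ K.
Proof.
  induction K; intros x H.
  - simpl. specialize (H 0%nat (le_n _)). simpl in H. rewrite Rmult_1_l in H. lra.
  - assert (H0 : nrm x <= / 4) by (specialize (H 0%nat ltac:(lia)); simpl in H; rewrite Rmult_1_l in H; lra).
    assert (H1 : nrm (2 * x) <= / 4 * / 2 ^ K).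
    { apply IHK. intros k Hk. replace (2 ^ k * (2 * x)) with (2 ^ S k * x) by (simpl; ring).
      apply H. lia. }
    rewrite nrm_double in H1 by auto. simpl.
    assert (0 < 2 ^ K) by (apply pow_lt; lra).
    rewrite Rinv_mult. 
    assert (nrm x <= / 4 * / 2 ^ K * / 2) by (apply (Rmult_le_reg_l 2); [lra|]; field_simplify; field_simplify in H1; lra).
    lra.
Qed.

Open Scope R_scope.

Definition GoodSeq (N : nat -> Z) : Prop :=
  (forall i, (0 < N i)%Z) /\
  (forall i, exists r, N (S i) = (r * N i)%Z /\ (Z.of_nat i + 2 < r)%Z).

Lemma N_div N (HN : GoodSeq N) j i : (j <= i)%nat -> (N j | N i)%Z.
Proof.
  induction 1. apply Z.divide_refl.
  destruct HN as [_ Hs]. destruct (Hs m) as [r [-> _]].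
  apply Z.divide_mul_r. auto.
Qed.

Lemma N_step N (HN : GoodSeq N) i : (2 * N i <= N (S i))%Z.
Proof. destruct HN as [H0 H]. destruct (H i) as [r [-> Hr]]. specialize (H0 i). nia. Qed.

Lemma N_mono N (HN : GoodSeq N) j i : (j <= i)%nat -> (N j <= N i)%Z.
Proof.
  induction 1. lia. pose proof (N_step N HN m). destruct HN as [Hp _]. specialize (Hp m). lia.
Qed.

Lemma N_big N (HN : GoodSeq N) i : (Z.of_nat i < N i)%Z.
Proof.
  induction i. destruct HN as [H0 _]. apply H0.
  pose proof (N_step N HN i). rewrite Nat2Z.inj_succ. destruct HN as [Hp _]. specialize (Hp i). lia.
Qed.

Lemma N_posR N (HN : GoodSeq N) i : 0 < IZR (N i).
Proof. apply IZR_lt. apply HN. Qed.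

Definition Dset (N : nat -> Z) (z : Z) (x : R) : Prop := exists j, x = nrm (IZR z / IZR (N j)).
Lemma Dset_bound N z : bound (Dset N z).
Proof. exists 1. intros x [j ->]. pose proof (nrm_half (IZR z / IZR (N j))). lra. Qed.
Lemma Dset_ne N z : exists x, Dset N z x.
Proof. exists (nrm (IZR z / IZR (N 0%nat))). exists 0%nat. auto. Qed.
Definition D N z : R := proj1_sig (completeness (Dset N z) (Dset_bound N z) (Dset_ne N z)).

Lemma D1 N z j : nrm (IZR z / IZR (N j)) <= D N z.
Proof. unfold D. destruct (completeness (Dset N z) (Dset_bound N z) (Dset_ne N z)) as [m Hm]. simpl. apply (proj1 Hm). exists j. auto. Qed.

Lemma D2 N z b : (forall j, nrm (IZR z / IZR (N j)) <= b) -> D N z <= b.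
Proof. intro H. unfold D. destruct (completeness (Dset N z) (Dset_bound N z) (Dset_ne N z)) as [m Hm]. simpl. apply (proj2 Hm). intros x [j ->]. auto. Qed.

Lemma D_ge0 N z : 0 <= D N z.
Proof. eapply Rle_trans. apply nrm_ge0. apply (D1 N z 0). Qed.

Lemma D_0 N : D N 0 = 0.
Proof. apply Rle_antisym. apply D2. intro j. unfold Rdiv. rewrite Rmult_0_l. rewrite nrm_Z. lra. apply D_ge0. Qed.

Lemma D_opp N z : D N (- z) = D N z.
Proof.
  apply Rle_antisym; apply D2; intro j.
  - rewrite opp_IZR. unfold Rdiv. rewrite Ropp_mult_distr_l_reverse, nrm_opp. apply D1.
  - rewrite <- (Z.opp_involutive z) at 1. rewrite opp_IZR. unfold Rdiv. rewrite Ropp_mult_distr_l_reverse, nrm_opp. apply D1.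
Qed.

Lemma D_add N a b : D N (a + b) <= D N a + D N b.
Proof.
  apply D2. intro j. rewrite plus_IZR. unfold Rdiv. rewrite Rmult_plus_distr_r.
  eapply Rle_trans. apply nrm_add. pose proof (D1 N a j). pose proof (D1 N b j). unfold Rdiv in *. lra.
Qed.

Lemma D_div N (HN : GoodSeq N) z i : D N z < / IZR (N i) -> (N i | z)%Z.
Proof.
  intro H. pose proof (D1 N z i). assert (Hl : nrm (IZR z / IZR (N i)) < / IZR (N i)) by lra.
  apply nrm_ltP in Hl. destruct Hl as [k Hk]. exists k.
  pose proof (N_posR N HN i).
  assert (Rabs (IZR (z - k * N i)) < 1).
  { rewrite minus_IZR, mult_IZR.
    replace (IZR z - IZR k * IZR (N i)) with (IZR (N i) * (IZR z / IZR (N i) - IZR k)) by (field; lra).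
    rewrite Rabs_mult, Rabs_right by lra.
    apply (Rmult_lt_compat_l (IZR (N i))) in Hk; auto. rewrite Rinv_r in Hk; lra. }
  apply IZR_abs_lt1 in H2. lia.
Qed.

Lemma D_pos N (HN : GoodSeq N) z : z <> 0%Z -> 0 < D N z.
Proof.
  intro Hz. destruct (Rle_lt_dec (D N z) 0); auto. exfalso.
  assert (H : (N (Z.to_nat (Z.abs z)) | z)%Z).
  { apply (D_div N HN). pose proof (N_posR N HN (Z.to_nat (Z.abs z))). apply Rinv_0_lt_compat in H. lra. }
  pose proof (N_big N HN (Z.to_nat (Z.abs z))). rewrite Z2Nat.id in H0 by lia.
  remember (N (Z.to_nat (Z.abs z))) as n eqn:En. clear En.
  destruct H as [q Hq]. rewrite Hq in H0.
  assert (q <> 0%Z) by (intro; subst; lia). nia.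
Qed.

Definition dd N (x y : Z) : R := D N (x - y).

Definition tN (N : nat -> Z) : topZ := fun U =>
  forall x, U x -> exists eps, eps > 0 /\ forall y, dd N x y < eps -> U y.

Lemma dd_sym N x y : dd N x y = dd N y x.
Proof. unfold dd. rewrite <- D_opp. f_equal. lia. Qed.

Lemma dd_tri N x y z : dd N x z <= dd N x y + dd N y z.
Proof. unfold dd. replace (x - z)%Z with ((x - y) + (y - z))%Z by lia. apply D_add. Qed.

Lemma dd_refl N x : dd N x x = 0.
Proof. unfold dd. rewrite Z.sub_diag. apply D_0. Qed.

Lemma ball_open N c r : tN N (fun y => dd N c y < r).
Proof.
  intros x Hx. exists (r - dd N c x). split. lra.
  intros y Hy. pose proof (dd_tri N c x y). lra.
Qed.

Lemma tN_top N : is_topology (tN N).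
Proof.
  split; [|split].
  - intros x _. exists 1. split. lra. auto.
  - intros I F HF x [i Hi]. destruct (HF i x Hi) as [e [He H]]. exists e. split; auto.
    intros y Hy. exists i. auto.
  - intros U V HU HV x [Ux Vx]. destruct (HU x Ux) as [e1 [He1 H1]]. destruct (HV x Vx) as [e2 [He2 H2]].
    exists (Rmin e1 e2). split. unfold Rmin; destruct Rle_dec; lra.
    intros y Hy. split; [apply H1|apply H2]; unfold Rmin in Hy; destruct Rle_dec in Hy; lra.
Qed.

Lemma tN_group N : is_group_topology (tN N).
Proof.
  split. apply tN_top.
  intros x y W HW Wxy. destruct (HW _ Wxy) as [e [He H]].
  exists (fun u => dd N x u < e / 2), (fun v => dd N y v < e / 2).
  split. apply ball_open. split. apply ball_open.
  split. rewrite dd_refl. lra. split. rewrite dd_refl. lra.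
  intros u v Hu Hv. apply H. unfold dd in *.
  replace (x - y - (u - v))%Z with ((x - u) + - (y - v))%Z by lia.
  eapply Rle_lt_trans. apply D_add. rewrite D_opp. lra.
Qed.

Lemma tN_metr N (HN : GoodSeq N) : metrizable (tN N).
Proof.
  exists (dd N). split; [|split; [|split; [|split]]].
  - intros. apply D_ge0.
  - intros x y. split.
    + intro H. destruct (Z.eq_dec x y); auto. exfalso. pose proof (D_pos N HN (x - y) ltac:(lia)). unfold dd in H. lra.
    + intros ->. apply dd_refl.
  - apply dd_sym.
  - apply dd_tri.
  - intro U. unfold tN. tauto.
Qed.

Lemma tN_haus N (HN : GoodSeq N) : hausdorff (tN N).
Proof.
  intros x y Hxy. assert (Hp : 0 < dd N x y) by (apply D_pos; auto; lia).
  exists (fun z => dd N x z < dd N x y / 2), (fun z => dd N y z < dd N x y / 2).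
  split. apply ball_open. split. apply ball_open. split. rewrite dd_refl; lra. split. rewrite dd_refl; lra.
  intros z H1 H2. pose proof (dd_tri N x z y) as T. rewrite (dd_sym N z y) in T. lra.
Qed.

Open Scope R_scope.

Lemma isZ_IZR k : isZ (IZR k).
Proof. exists k; auto. Qed.
Lemma isZ_add x y : isZ x -> isZ y -> isZ (x + y).
Proof. intros [a ->] [b ->]. exists (a + b)%Z. rewrite plus_IZR; auto. Qed.
Lemma isZ_sub x y : isZ x -> isZ y -> isZ (x - y).
Proof. intros [a ->] [b ->]. exists (a - b)%Z. rewrite minus_IZR; auto. Qed.
Lemma isZ_mul x y : isZ x -> isZ y -> isZ (x * y).
Proof. intros [a ->] [b ->]. exists (a * b)%Z. rewrite mult_IZR; auto. Qed.
Lemma isZ_eq x y : x = y -> isZ x -> isZ y.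
Proof. intros ->; auto. Qed.

Lemma hom_lin f : hom_to_T f -> forall m, isZ (f m - IZR m * f 1%Z).
Proof.
  intros Hf. apply Z.peano_ind.
  - destruct (Hf 0%Z 0%Z) as [k Hk]. simpl in Hk. exists (- k)%Z. rewrite opp_IZR. rewrite <- Hk. simpl. ring.
  - intros x [a Ha]. destruct (Hf x 1%Z) as [k Hk]. exists (a + k)%Z. rewrite plus_IZR, <- Ha, <- Hk.
    rewrite <- Z.add_1_r. rewrite plus_IZR. simpl. ring.
  - intros x [a Ha]. destruct (Hf (Z.pred x) 1%Z) as [k Hk]. exists (a - k)%Z.
    rewrite minus_IZR, <- Ha, <- Hk. replace (Z.pred x + 1)%Z with x by lia.
    rewrite <- Z.sub_1_r. rewrite minus_IZR. simpl. ring.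
Qed.

Lemma hom_diff f : hom_to_T f -> forall x y, isZ (f y - f x - IZR (y - x) * f 1%Z).
Proof.
  intros Hf x y. pose proof (hom_lin f Hf x). pose proof (hom_lin f Hf y).
  eapply isZ_eq; [|apply (isZ_sub _ _ H0 H)]. rewrite minus_IZR. ring.
Qed.

Lemma pow2_pos k : 0 < 2 ^ k.
Proof. apply pow_lt; lra. Qed.

Lemma INR_le_pow2 n : INR n <= 2 ^ n.
Proof.
  induction n. simpl; lra. rewrite S_INR. simpl.
  assert (1 <= 2 ^ n) by (clear; induction n; simpl; lra). lra.
Qed.

Lemma nat_large x : exists n, x < INR n.
Proof.
  destruct (archimed x) as [H1 _]. destruct (Z_le_gt_dec 0 (up x)).
  - exists (Z.to_nat (up x)). rewrite INR_IZR_INZ, Z2Nat.id by lia. lra.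
  - exists 0%nat. simpl. assert (Hu : (up x < 0)%Z) by lia. apply IZR_lt in Hu. lra.
Qed.

Lemma pow2_large x : exists K, x < 2 ^ K.
Proof. destruct (nat_large x) as [n Hn]. exists n. pose proof (INR_le_pow2 n). lra. Qed.

Lemma pow2_small e : e > 0 -> exists K, / 4 * / 2 ^ K < e.
Proof.
  intro He. destruct (pow2_large (/ e)) as [K HK]. exists K.
  pose proof (pow2_pos K).
  assert (/ 2 ^ K < e).
  { apply (Rmult_lt_reg_l (2 ^ K)); auto. rewrite Rinv_r by lra.
    apply (Rmult_lt_reg_l (/ e)). apply Rinv_0_lt_compat; lra.
    replace (/ e * (2 ^ K * e)) with (2 ^ K) by (field; lra). lra. }
  assert (0 < / 2 ^ K) by (apply Rinv_0_lt_compat; lra). lra.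
Qed.

Definition gch (N : nat -> Z) (k j : nat) : Z -> R := fun m => 2 ^ k * (IZR m / IZR (N j)).

Lemma nrm_le_D N m j k : nrm (2 ^ k * (IZR m / IZR (N j))) <= 2 ^ k * D N m.
Proof.
  eapply Rle_trans. apply nrm_pow2. apply Rmult_le_compat_l. left; apply pow2_pos. apply D1.
Qed.

Lemma gch_char N k j : character (tN N) (gch N k j).
Proof.
  split.
  - intros m n. exists 0%Z. unfold gch. rewrite plus_IZR. unfold Rdiv. ring.
  - intros x eps Heps. pose proof (pow2_pos k).
    exists (fun y => dd N x y < eps / 2 ^ k). split. apply ball_open. split.
    rewrite dd_refl. apply Rdiv_lt_0_compat; lra.
    intros y Hy. apply nrm_ltP. unfold gch.
    replace (2 ^ k * (IZR y / IZR (N j)) - 2 ^ k * (IZR x / IZR (N j))) with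
      (2 ^ k * (IZR (y - x) / IZR (N j))) by (rewrite minus_IZR; unfold Rdiv; ring).
    eapply Rle_lt_trans. apply nrm_le_D.
    replace (D N (y - x)) with (dd N x y) by (unfold dd; rewrite <- D_opp; f_equal; lia).
    apply (Rmult_lt_compat_l (2 ^ k)) in Hy; auto.
    replace (2 ^ k * (eps / 2 ^ k)) with eps in Hy by (field; lra). lra.
Qed.

Lemma D_eq_dd0 N m : dd N 0 m = D N m.
Proof. unfold dd. rewrite Z.sub_0_l. apply D_opp. Qed.

Lemma tN_lqc N : loc_quasi_convex (tN N).
Proof.
  intros U [V [HV [V0 VU]]]. destruct (HV 0%Z V0) as [eps [Heps Hb]].
  destruct (pow2_small eps Heps) as [K HK].
  exists (fun m => forall j k, (k <= K)%nat -> nrm (gch N k j m) <= / 4).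
  split; [|split].
  - intro x. split.
    + intros Qx f [Hc Hf]. apply Hf. auto.
    + intros Hp j k Hk. apply nrm_Tplus. apply Hp. split. apply gch_char.
      intros a Qa. apply nrm_Tplus. apply Qa; auto.
  - exists (fun m => dd N 0 m < / 4 * / 2 ^ K). split. apply ball_open. split.
    + rewrite dd_refl. pose proof (pow2_pos K). assert (0 < / 2 ^ K) by (apply Rinv_0_lt_compat; lra). lra.
    + intros m Hm j k Hk. rewrite D_eq_dd0 in Hm. unfold gch. eapply Rle_trans. apply nrm_le_D.
      pose proof (pow2_pos k). pose proof (pow2_pos K).
      assert (2 ^ k <= 2 ^ K) by (apply Rle_pow; [lra|auto]).
      apply Rlt_le. eapply Rle_lt_trans. apply (Rmult_le_compat_r (D N m)). apply D_ge0. apply H1.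
      apply (Rmult_lt_compat_l (2 ^ K)) in Hm; auto.
      replace (2 ^ K * (/ 4 * / 2 ^ K)) with (/ 4) in Hm by (field; lra). lra.
  - intros m Qm. apply VU. apply Hb. rewrite D_eq_dd0.
    apply Rle_lt_trans with (/ 4 * / 2 ^ K); auto. apply D2. intro j.
    apply doubling. intros k Hk. apply Qm. auto.
Qed.

Open Scope R_scope.

Lemma IZR_N_div N (HN : GoodSeq N) j i : (j <= i)%nat ->
  exists q, IZR (N i) / IZR (N j) = IZR q.
Proof.
  intro H. destruct (N_div N HN j i H) as [q Hq]. exists q. rewrite Hq, mult_IZR.
  pose proof (N_posR N HN j). field. lra.
Qed.

Lemma N_leR N (HN : GoodSeq N) j i : (j <= i)%nat -> IZR (N j) <= IZR (N i).
Proof. intro. apply IZR_le. apply N_mono; auto. Qed.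

Lemma N_stepR N (HN : GoodSeq N) i : 2 * IZR (N i) <= IZR (N (S i)).
Proof. pose proof (N_step N HN i). apply IZR_le in H. rewrite mult_IZR in H. auto. Qed.

Lemma small_step N (HN : GoodSeq N) th delta s : delta > 0 -> s > 0 ->
  (forall m, D N m < delta -> nrm (IZR m * th) < / 4) ->
  exists i0, forall i, (i0 <= i)%nat -> nrm (IZR (N i) * th) <= s / 2.
Proof.
  intros Hd Hs Hc. destruct (pow2_small (s / 2) ltac:(lra)) as [K HK].
  destruct (nat_large (2 ^ K / delta)) as [i0 Hi0]. exists i0. intros i Hi.
  destruct HN as [Hpos Hr]. destruct (Hr i) as [r [Er Hr']].
  assert (HN : GoodSeq N) by (split; auto).
  assert (Hrr : INR i0 + 2 < IZR r).
  { apply le_INR in Hi. apply IZR_lt in Hr'. rewrite plus_IZR, <- INR_IZR_INZ in Hr'. lra. }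
  pose proof (N_posR N HN i) as Pi.
  assert (Pr : 0 < IZR r) by (pose proof (pos_INR i0); lra).
  pose proof (pow2_pos K) as PK.
  assert (HrK : 2 ^ K / IZR r < delta).
  { apply (Rmult_lt_reg_l (IZR r)); auto. replace (IZR r * (2 ^ K / IZR r)) with (2 ^ K) by (field; lra).
    apply (Rmult_lt_reg_l (/ delta)). apply Rinv_0_lt_compat; lra.
    replace (/ delta * (IZR r * delta)) with (IZR r) by (field; lra). unfold Rdiv in Hi0. lra. }
  eapply Rle_trans; [|apply Rlt_le; apply HK]. apply doubling. intros k Hk.
  apply Rlt_le. rewrite <- Rmult_assoc.
  replace (2 ^ k * IZR (N i)) with (IZR (2 ^ Z.of_nat k * N i)) by (rewrite mult_IZR, <- pow_IZR; auto).
  apply Hc. pose proof (pow2_pos k).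
  assert (2 ^ k <= 2 ^ K) by (apply Rle_pow; [lra|auto]).
  apply Rle_lt_trans with (2 ^ k / IZR r).
  2:{ apply Rle_lt_trans with (2 ^ K / IZR r); auto. unfold Rdiv. apply Rmult_le_compat_r; auto.
      left; apply Rinv_0_lt_compat; auto. }
  apply D2. intro j. rewrite mult_IZR, <- pow_IZR.
  destruct (le_lt_dec j i) as [Hji|Hji].
  - destruct (IZR_N_div N HN j i Hji) as [q Hq].
    replace (2 ^ k * IZR (N i) / IZR (N j)) with (IZR (2 ^ Z.of_nat k * q)).
    rewrite nrm_Z. apply Rlt_le. apply Rdiv_lt_0_compat; auto.
    rewrite mult_IZR, <- pow_IZR, <- Hq. unfold Rdiv. ring.
  - eapply Rle_trans. apply nrm_abs. pose proof (N_posR N HN j) as Pj.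
    assert (IZR (N (S i)) <= IZR (N j)) by (apply N_leR; auto).
    rewrite Rabs_right by (apply Rle_ge; unfold Rdiv; apply Rmult_le_pos; [apply Rmult_le_pos; lra| left; apply Rinv_0_lt_compat; lra]).
    rewrite Er, mult_IZR in H1.
    apply (Rmult_le_reg_r (IZR (N j))); auto.
    replace (2 ^ k * IZR (N i) / IZR (N j) * IZR (N j)) with (2 ^ k * IZR (N i)) by (field; lra).
    replace (2 ^ k / IZR r * IZR (N j)) with (2 ^ k * (IZR (N j) / IZR r)) by (field; lra).
    apply Rmult_le_compat_l. lra.
    apply (Rmult_le_reg_r (IZR r)); auto. replace (IZR (N j) / IZR r * IZR r) with (IZR (N j)) by (field; lra). lra.
Qed.

Lemma grow_step N (HN : GoodSeq N) th i :
  2 * nrm (IZR (N i) * th) * IZR (N (S i)) < IZR (N i) ->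
  2 * nrm (IZR (N i) * th) <= nrm (IZR (N (S i)) * th).
Proof.
  intro H. destruct HN as [Hpos Hr]. destruct (Hr i) as [r [Er Hr']].
  assert (HN : GoodSeq N) by (split; auto). pose proof (N_posR N HN i) as Pi.
  assert (Pr : 3 <= IZR r) by (apply IZR_le; lia).
  destruct (nrm_att (IZR (N i) * th)) as [k Hk].
  rewrite Er, mult_IZR in *.
  replace (IZR r * IZR (N i) * th) with (IZR r * (IZR (N i) * th - IZR k) + IZR (r * k))
    by (rewrite mult_IZR; ring).
  rewrite nrm_shift by apply isZ_IZR.
  assert (Hsm : IZR r * nrm (IZR (N i) * th) < / 2).
  { apply (Rmult_lt_reg_r (2 * IZR (N i))). lra. nra. }
  rewrite (nrm_small (IZR r * (IZR (N i) * th - IZR k))); rewrite Rabs_mult, Hk, (Rabs_right (IZR r)) by lra.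
  pose proof (nrm_ge0 (IZR (N i) * th)). nra. lra.
Qed.

Lemma nontriv_step N (HN : GoodSeq N) th s i0 :
  (forall i, ~ isZ (IZR (N i) * th)) ->
  (forall i, (i0 <= i)%nat -> nrm (IZR (N i) * th) <= s / 2) ->
  forall L, exists i, (L <= i)%nat /\ nrm (IZR (N i) * th) <= s / 2 /\
     IZR (N i) <= 2 * nrm (IZR (N i) * th) * IZR (N (S i)).
Proof.
  intros Hno Hsm L. apply NNPP. intro Hn.
  set (L' := max L i0).
  assert (Hg : forall i, (L' <= i)%nat -> 2 * nrm (IZR (N i) * th) <= nrm (IZR (N (S i)) * th)).
  { intros i Hi. apply grow_step; auto. apply Rnot_le_lt. intro Hc. apply Hn. exists i.
    split. lia. split. apply Hsm. lia. auto. }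
  assert (Hpow : forall n, 2 ^ n * nrm (IZR (N L') * th) <= nrm (IZR (N (L' + n)%nat) * th)).
  { induction n. simpl. rewrite Nat.add_0_r. lra.
    replace (L' + S n)%nat with (S (L' + n)) by lia.
    eapply Rle_trans; [|apply Hg; lia]. simpl. lra. }
  assert (Hp : 0 < nrm (IZR (N L') * th)).
  { destruct (nrm_ge0 (IZR (N L') * th)); auto. exfalso. apply (Hno L'). apply nrm_zero. auto. }
  destruct (pow2_large (/ (2 * nrm (IZR (N L') * th)))) as [n Hn'].
  pose proof (Hpow n). pose proof (nrm_half (IZR (N (L' + n)%nat) * th)).
  apply (Rmult_lt_compat_r (2 * nrm (IZR (N L') * th))) in Hn'; [|lra].
  rewrite Rinv_l in Hn' by lra. lra.
Qed.

Lemma choose_c N (HN : GoodSeq N) th s i : s > 0 ->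
  ~ isZ (IZR (N i) * th) ->
  nrm (IZR (N i) * th) <= s / 2 ->
  IZR (N i) <= 2 * nrm (IZR (N i) * th) * IZR (N (S i)) ->
  exists c v, Rabs (IZR c) * IZR (N i) <= 2 * s * IZR (N (S i)) /\
    s / 2 <= v /\ v <= s /\ isZ (IZR c * (IZR (N i) * th) - v).
Proof.
  intros Hs Hno Hsm Hbig. destruct (nrm_att (IZR (N i) * th)) as [k Hk].
  set (y := IZR (N i) * th - IZR k). change (Rabs y = nrm (IZR (N i) * th)) in Hk.
  assert (Hy : 0 < Rabs y).
  { rewrite Hk. destruct (nrm_ge0 (IZR (N i) * th)); auto. exfalso. apply Hno. apply nrm_zero. auto. }
  set (q := fl (s / Rabs y)). destruct (fl_spec (s / Rabs y)) as [F1 F2]. fold q in F1, F2.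
  assert (Hq : s - Rabs y < IZR q * Rabs y /\ IZR q * Rabs y <= s).
  { split.
    - apply (Rmult_lt_compat_r (Rabs y)) in F2; auto.
      replace (s / Rabs y * Rabs y) with s in F2 by (field; lra). lra.
    - apply (Rmult_le_compat_r (Rabs y)) in F1; [|lra].
      replace (s / Rabs y * Rabs y) with s in F1 by (field; lra). lra. }
  assert (q0 : 0 <= IZR q).
  { apply Rmult_le_reg_r with (Rabs y); auto. lra. }
  pose proof (N_posR N HN i) as Pi.
  exists (if Rle_dec 0 y then q else (- q)%Z), (IZR q * Rabs y). split; [|split; [|split]].
  - assert (Rabs (IZR (if Rle_dec 0 y then q else (- q)%Z)) = IZR q).
    { destruct Rle_dec; [|rewrite opp_IZR, Rabs_Ropp]; apply Rabs_right; lra. }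
    rewrite H. apply (Rmult_le_compat_r (IZR (N i))) in F1; [|lra].
    eapply Rle_trans. apply F1.
    apply (Rmult_le_reg_r (Rabs y)); auto.
    replace (s / Rabs y * IZR (N i) * Rabs y) with (s * IZR (N i)) by (field; lra).
    rewrite <- Hk in Hbig. pose proof (N_posR N HN (S i)). nra.
  - lra.
  - lra.
  - replace (IZR (if Rle_dec 0 y then q else (- q)%Z) * (IZR (N i) * th) - IZR q * Rabs y)
      with (IZR (if Rle_dec 0 y then q else (- q)%Z) * IZR k).
    apply isZ_mul; apply isZ_IZR.
    destruct Rle_dec.
    + rewrite Rabs_right by lra. unfold y. ring.
    + rewrite Rabs_left by lra. rewrite opp_IZR. unfold y. ring.
Qed.

Definition Inv N th s (m : Z) (L : nat) (S0 : R) : Prop :=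
  Rabs (IZR m) <= 4 * s * IZR (N L) /\
  (forall j, nrm (IZR m / IZR (N j)) <= 4 * s) /\
  isZ (IZR m * th - S0).

Lemma Inv_ext N (HN : GoodSeq N) th s m L S0 i c v : s > 0 ->
  Inv N th s m L S0 -> (L <= i)%nat ->
  Rabs (IZR c) * IZR (N i) <= 2 * s * IZR (N (S i)) ->
  isZ (IZR c * (IZR (N i) * th) - v) ->
  Inv N th s (m + c * N i) (S i) (S0 + v).
Proof.
  intros Hs [I1 [I2 I3]] HL Hc Hz.
  pose proof (N_posR N HN i) as Pi. pose proof (N_stepR N HN i).
  pose proof (N_leR N HN L i HL).
  assert (A : Rabs (IZR (m + c * N i)) <= 4 * s * IZR (N (S i))).
  { rewrite plus_IZR, mult_IZR. eapply Rle_trans. apply Rabs_triang.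
    rewrite Rabs_mult, (Rabs_right (IZR (N i))) by lra. nra. }
  split; [|split].
  - auto.
  - intro j. destruct (le_lt_dec j i) as [Hji|Hji].
    + destruct (IZR_N_div N HN j i Hji) as [q Hq].
      pose proof (N_posR N HN j).
      replace (IZR (m + c * N i) / IZR (N j)) with (IZR m / IZR (N j) + IZR (c * q)).
      rewrite nrm_shift by apply isZ_IZR. auto.
      rewrite plus_IZR, !mult_IZR, <- Hq. field. lra.
    + pose proof (N_posR N HN j). assert (IZR (N (S i)) <= IZR (N j)) by (apply N_leR; auto).
      eapply Rle_trans. apply nrm_abs. unfold Rdiv. rewrite Rabs_mult.
      rewrite (Rabs_right (/ IZR (N j))) by (left; apply Rinv_0_lt_compat; lra).
      apply (Rmult_le_reg_r (IZR (N j))); auto. rewrite Rmult_assoc, Rinv_l, Rmult_1_r by lra.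
      nra.
  - eapply isZ_eq; [|apply (isZ_add _ _ I3 Hz)]. rewrite plus_IZR, mult_IZR. ring.
Qed.

Lemma dual_key N (HN : GoodSeq N) (th delta : R) : delta > 0 ->
  (forall m, D N m < delta -> nrm (IZR m * th) < / 4) ->
  exists i, isZ (IZR (N i) * th).
Proof.
  intros Hd Hc. apply NNPP. intro Hn.
  assert (Hno : forall i, ~ isZ (IZR (N i) * th)) by (intros i Hi; apply Hn; exists i; auto).
  set (s := Rmin (delta / 5) (/ 8)).
  assert (Hs : 0 < s /\ 4 * s < delta /\ s <= / 8) by (unfold s, Rmin; destruct Rle_dec; lra).
  destruct (small_step N HN th delta s Hd ltac:(lra) Hc) as [i0 Hi0].
  pose proof (nontriv_step N HN th s i0 Hno Hi0) as Hnt.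
  assert (Hit : forall k : nat, exists m L S0, Inv N th s m L S0 /\
      ((/ 4 <= S0 /\ S0 <= / 2) \/ (0 <= S0 < / 4 /\ INR k * (s / 2) <= S0))).
  { induction k.
    - exists 0%Z, 0%nat, 0. split. split; [|split].
      + rewrite Rabs_R0. pose proof (N_posR N HN 0). apply Rmult_le_pos; lra.
      + intro j. unfold Rdiv. rewrite Rmult_0_l. rewrite nrm_Z. lra.
      + exists 0%Z. ring.
      + right. simpl. lra.
    - destruct IHk as [m [L [S0 [HI [HS|HS]]]]].
      + exists m, L, S0. auto.
      + destruct (Hnt L) as [i [HLi [Hsi Hbi]]].
        destruct (choose_c N HN th s i ltac:(lra) (Hno i) Hsi Hbi) as [c [v [Hcv [Hv1 [Hv2 Hv3]]]]].
        exists (m + c * N i)%Z, (S i), (S0 + v). split. apply (Inv_ext N HN th s m L S0 i c v); auto; lra.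
        rewrite S_INR. destruct (Rle_lt_dec (/ 4) (S0 + v)).
        * left. lra.
        * right. lra. }
  destruct (nat_large (/ 2 / s)) as [k Hk].
  destruct (Hit k) as [m [L [S0 [[I1 [I2 I3]] HS]]]].
  assert (HS' : / 4 <= S0 <= / 2).
  { destruct HS as [HS|HS]; auto. exfalso.
    apply (Rmult_lt_compat_r (s / 2)) in Hk; [|lra].
    replace (/ 2 / s * (s / 2)) with (/ 4) in Hk by (field; lra). lra. }
  assert (HD : D N m < delta) by (apply Rle_lt_trans with (4 * s); [apply D2; auto|lra]).
  specialize (Hc m HD).
  replace (IZR m * th) with (S0 + (IZR m * th - S0)) in Hc by ring.
  rewrite nrm_shift in Hc by auto. rewrite nrm_small in Hc. rewrite Rabs_right in Hc; lra. rewrite Rabs_right; lra.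
Qed.

Open Scope Z_scope.

Lemma open_local (t : topZ) (S : Z -> Prop) : is_topology t ->
  (forall z, S z -> exists U, t U /\ U z /\ forall y, U y -> S y) -> t S.
Proof.
  intros [_ [Hu _]] H.
  set (I := {U : Z -> Prop | t U /\ forall y, U y -> S y}).
  assert (E : (fun x => exists i : I, proj1_sig i x) = S).
  { apply functional_extensionality. intro x. apply propositional_extensionality. split.
    - intros [i Hx]. destruct i as [U HU]. simpl in Hx. apply (proj2 HU). auto.
    - intro Hx. destruct (H x Hx) as [U [HU [Ux HS]]]. exists (exist _ U (conj HU HS)). simpl. auto. }
  rewrite <- E. apply Hu. intros i. destruct i as [U HU]. simpl. apply HU.
Qed.

Lemma trans_open (l : topZ) V x : is_group_topology l -> l V -> l (fun y => V (y - x)).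
Proof.
  intros [Ht Hg] HV. apply open_local; auto. intros z Hz.
  destruct (Hg z x V HV Hz) as [U1 [U2 [H1 [H2 [U1z [U2x H]]]]]].
  exists U1. split; [auto|split; [auto|]]. intros y Hy. apply H; auto.
Qed.

Lemma nbhd_mono (t : topZ) (U U' : Z -> Prop) x : nbhd t U x -> (forall y, U y -> U' y) -> nbhd t U' x.
Proof. intros [V [HV [Vx H]]] H'. exists V. auto. Qed.

Lemma nbhd_inter (t : topZ) U U' x : is_topology t -> nbhd t U x -> nbhd t U' x ->
  nbhd t (fun y => U y /\ U' y) x.
Proof.
  intros [_ [_ Hi]] [V [HV [Vx H]]] [V' [HV' [Vx' H']]].
  exists (fun y => V y /\ V' y). split. apply Hi; auto. split; auto. intros y [? ?]; auto.
Qed.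

Lemma subgroup_mul H n : subgroupZ H -> H n -> forall q, H (q * n).
Proof.
  intros [H0 Hs] Hn. assert (Hneg : forall x, H x -> H (- x)).
  { intros x Hx. replace (- x) with (0 - x) by lia. auto. }
  assert (Hadd : forall x y, H x -> H y -> H (x + y)).
  { intros x y Hx Hy. replace (x + y) with (x - - y) by lia. auto. }
  apply Z.peano_ind.
  - simpl. auto.
  - intros q Hq. replace (Z.succ q * n) with (q * n + n) by lia. auto.
  - intros q Hq. replace (Z.pred q * n) with (q * n - n) by lia. auto.
Qed.

Lemma subgroup_struct H h : subgroupZ H -> H h -> h <> 0 ->
  exists n, 0 < n /\ forall x, H x <-> (n | x).
Proof.
  intros HH Hh Hh0.
  assert (Hpos : H (Z.abs h)).
  { destruct (Z.abs_eq_or_opp h) as [E|E]; rewrite E; auto.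
    replace (- h) with (-1 * h) by lia. apply subgroup_mul; auto. }
  assert (Hmin : forall k : nat, (0 < Z.of_nat k) -> H (Z.of_nat k) ->
     exists n, 0 < n /\ H n /\ forall m, 0 < m < n -> ~ H m).
  { intro k. induction k as [k IH] using (well_founded_induction lt_wf). intros Hk Hk'.
    destruct (classic (exists m, 0 < m < Z.of_nat k /\ H m)) as [[m [Hm Hm']]|Hno].
    - apply (IH (Z.to_nat m)). lia. lia. rewrite Z2Nat.id by lia. auto.
    - exists (Z.of_nat k). split; auto. split; auto. intros m Hm Hm'. apply Hno. eauto. }
  destruct (Hmin (Z.to_nat (Z.abs h))) as [n [Hn [Hn' Hnm]]]. lia. rewrite Z2Nat.id by lia. auto.
  exists n. split; auto. intro x. split.
  - intro Hx. pose proof (Z.mod_pos_bound x n Hn). pose proof (Z.div_mod x n ltac:(lia)).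
    destruct (Z.eq_dec (x mod n) 0) as [E|E].
    + exists (x / n). lia.
    + exfalso. apply (Hnm (x mod n)). lia.
      replace (x mod n) with (x - (x / n) * n) by lia. apply HH; auto. apply subgroup_mul; auto.
  - intros [q ->]. apply subgroup_mul; auto.
Qed.

Definition good (l : topZ) (n : Z) : Prop := 0 < n /\ nbhd l (fun x => (n | x)) 0.


Lemma nbhd_sub_good l : is_group_topology l -> linear_top l -> non_discrete l ->
  forall U, nbhd l U 0 -> exists n, good l n /\ forall x, (n | x) -> U x.
Proof.
  intros Hg Hl Hnd U HU. destruct (Hl U HU) as [H [HH [HHn HHU]]].
  assert (Hh : exists h, H h /\ h <> 0).
  { apply NNPP. intro Hno. apply Hnd. destruct HHn as [V [HV [V0 VH]]].
    replace (fun x : Z => x = 0) with V; auto.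
    apply functional_extensionality. intro x. apply propositional_extensionality. split.
    - intro Vx. apply NNPP. intro Hx. apply Hno. exists x. auto.
    - intros ->. auto. }
  destruct Hh as [h [Hh Hh0]]. destruct (subgroup_struct H h HH Hh Hh0) as [n [Hn Hx]].
  exists n. split. split; auto. apply (nbhd_mono _ H); auto. intro; apply Hx.
  intros x Hnx. apply HHU. apply Hx. auto.
Qed.

Lemma good_lcm l a b : is_topology l -> good l a -> good l b -> good l (Z.lcm a b).
Proof.
  intros Ht [Ha Na] [Hb Nb]. split.
  - pose proof (Z.lcm_nonneg a b). assert (Z.lcm a b <> 0) by (rewrite Z.lcm_eq_0; lia). lia.
  - eapply nbhd_mono. apply (nbhd_inter _ _ _ _ Ht Na Nb). intros y [Hy1 Hy2]. apply Z.lcm_least; auto.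
Qed.

Lemma good_1 l : is_topology l -> good l 1.
Proof. intros Ht. split. lia. exists (fun _ => True). split. apply Ht. split; auto. intros. apply Z.divide_1_l. Qed.

Lemma good_avoid l : is_group_topology l -> linear_top l -> non_discrete l -> hausdorff l ->
  forall x, x <> 0 -> exists n, good l n /\ ~ (n | x).
Proof.
  intros Hg Hl Hnd Hh x Hx. destruct (Hh 0 x ltac:(lia)) as [U [V [HU [HV [U0 [Vx H]]]]]].
  destruct (nbhd_sub_good l Hg Hl Hnd U) as [n [Hn HnU]]. exists U; auto.
  exists n. split; auto. intro Hd. apply (H x); auto.
Qed.

Lemma fact_div (n : nat) : forall q, 1 <= q <= Z.of_nat n -> (q | Z.of_nat (fact n)).
Proof.
  induction n; intros q Hq. simpl in Hq. lia.
  simpl fact. rewrite Nat2Z.inj_add, Nat2Z.inj_mul.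
  replace (Z.of_nat (fact n) + Z.of_nat n * Z.of_nat (fact n)) with (Z.of_nat (S n) * Z.of_nat (fact n)) by lia.
  destruct (Z.eq_dec q (Z.of_nat (S n))) as [->|E].
  - apply Z.divide_mul_l. apply Z.divide_refl.
  - apply Z.divide_mul_r. apply IHn. lia.
Qed.

Lemma fact_pos n : 0 < Z.of_nat (fact n).
Proof. pose proof (lt_O_fact n). lia. Qed.

Lemma grow l : is_group_topology l -> linear_top l -> non_discrete l -> hausdorff l ->
  forall g h R, good l g -> good l h -> 0 <= R ->
  exists g', good l g' /\ (g | g') /\ (h | g') /\ R * g < g'.
Proof.
  intros Hg Hl Hnd Hh g h R Gg Gh HR.
  set (x := g * h * Z.of_nat (fact (Z.to_nat R))).
  assert (Hx : x <> 0). { unfold x. pose proof (fact_pos (Z.to_nat R)). destruct Gg, Gh. nia. }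
  destruct (good_avoid l Hg Hl Hnd Hh x Hx) as [n [Gn Hn]].
  pose proof (proj1 Hg) as Ht.
  exists (Z.lcm (Z.lcm g h) n). split. apply good_lcm; auto. apply good_lcm; auto.
  assert (Dg : (g | Z.lcm (Z.lcm g h) n)) by (eapply Z.divide_trans; [apply Z.divide_lcm_l|apply Z.divide_lcm_l]).
  split; auto. split. eapply Z.divide_trans; [apply Z.divide_lcm_r|apply Z.divide_lcm_l].
  destruct (Z_lt_le_dec (R * g) (Z.lcm (Z.lcm g h) n)) as [E|E]; auto. exfalso.
  apply Hn. destruct Dg as [q Hq].
  assert (Hp : 0 < Z.lcm (Z.lcm g h) n).
  { destruct (good_lcm l _ _ Ht (good_lcm l _ _ Ht Gg Gh) Gn). auto. }
  destruct Gg as [Hg0 _].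
  assert (Hq1 : 1 <= q <= R) by nia.
  eapply Z.divide_trans. apply Z.divide_lcm_r.
  rewrite Hq. unfold x. rewrite (Z.mul_comm q g), <- Z.mul_assoc.
  apply Z.mul_divide_mono_l.
  apply Z.divide_mul_r. apply fact_div. rewrite Z2Nat.id; lia.
Qed.

Lemma next_ex l : is_group_topology l -> linear_top l -> non_discrete l -> hausdorff l ->
  forall (i : nat) g, exists g', good l g ->
    good l g' /\ (g | g') /\ (good l (Z.of_nat i + 1) -> (Z.of_nat i + 1 | g')) /\
    (Z.of_nat i + 2) * g < g'.
Proof.
  intros Hg Hl Hnd Hh i g. destruct (classic (good l g)) as [Gg|Gg].
  2:{ exists 0. intro; contradiction. }
  destruct (classic (good l (Z.of_nat i + 1))) as [Gi|Gi].
  - destruct (grow l Hg Hl Hnd Hh g _ (Z.of_nat i + 2) Gg Gi ltac:(lia)) as [g' [? [? [? ?]]]].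
    exists g'. intros _. split; [|split; [|split]]; auto.
  - destruct (grow l Hg Hl Hnd Hh g 1 (Z.of_nat i + 2) Gg (good_1 l (proj1 Hg)) ltac:(lia)) as [g' [? [? [? ?]]]].
    exists g'. intros _. split; [|split; [|split]]; auto. intro; contradiction.
Qed.

Lemma seq_exists l : is_group_topology l -> linear_top l -> non_discrete l -> hausdorff l ->
  exists N, GoodSeq N /\ (forall i, nbhd l (fun x => (N i | x)) 0) /\
    (forall U, nbhd l U 0 -> exists i, forall x, (N i | x) -> U x).
Proof.
  intros Hg Hl Hnd Hh.
  set (nx := fun i g => proj1_sig (constructive_indefinite_description _ (next_ex l Hg Hl Hnd Hh i g))).
  assert (Hnx : forall i g, good l g -> good l (nx i g) /\ (g | nx i g) /\
      (good l (Z.of_nat i + 1) -> (Z.of_nat i + 1 | nx i g)) /\ (Z.of_nat i + 2) * g < nx i g).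
  { intros i g. unfold nx. destruct constructive_indefinite_description as [g' Hg']. simpl. auto. }
  set (N := fix N (i : nat) : Z := match i with O => 1 | S i => nx i (N i) end).
  assert (GN : forall i, good l (N i)).
  { induction i. apply good_1. apply Hg. simpl. apply Hnx. auto. }
  exists N. split; [|split].
  - split. intro i. apply GN.
    intro i. destruct (Hnx i (N i) (GN i)) as [_ [[r Hr] [_ Hlt]]]. exists r. split. simpl. auto.
    destruct (GN i) as [Hp _]. simpl in Hlt. rewrite Hr in Hlt. nia.
  - intro i. apply GN.
  - intros U HU. destruct (nbhd_sub_good l Hg Hl Hnd U HU) as [n [Gn HnU]].
    exists (S (Z.to_nat (n - 1))). intros x Hx. apply HnU.
    destruct Gn as [Hn0 Gn']. assert (E : n = Z.of_nat (Z.to_nat (n - 1)) + 1) by lia.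
    destruct (Hnx (Z.to_nat (n - 1)) (N (Z.to_nat (n - 1))) (GN _)) as [_ [_ [Hd _]]].
    eapply Z.divide_trans; [|apply Hx]. simpl. rewrite E at 1. apply Hd. rewrite <- E. split; auto.
Qed.

Open Scope R_scope.

Lemma part1 (l : topZ) :
  is_group_topology l -> hausdorff l -> linear_top l -> non_discrete l ->
  exists t : topZ,
    is_group_topology t /\ metrizable t /\ loc_quasi_convex t /\
    hausdorff t /\ strictly_finer t l /\ same_dual t l.
Proof.
  intros Hg Hh Hl Hnd.
  destruct (seq_exists l Hg Hl Hnd Hh) as [N [HN [Nn Ncof]]].
  assert (Hfin : finer (tN N) l).
  { intros W HW x Wx. destruct (proj2 Hg x 0%Z W HW ltac:(rewrite Z.sub_0_r; auto))
      as [U1 [V1 [H1 [H2 [U1x [V10 H]]]]]].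
    destruct (Ncof V1) as [i Hi]. exists V1; auto.
    exists (/ IZR (N i)). split. apply Rinv_0_lt_compat. apply N_posR; auto.
    intros y Hy. apply (D_div N HN) in Hy. apply Hi in Hy.
    replace y with (x - (x - y))%Z by lia. apply H; auto. }
  exists (tN N). split; [|split; [|split; [|split; [|split]]]].
  - apply tN_group.
  - apply tN_metr; auto.
  - apply tN_lqc.
  - apply tN_haus; auto.
  - split; auto. exists (fun y => dd N 0 y < / 4). split. apply ball_open.
    intro HU. destruct (Ncof (fun y => dd N 0 y < / 4)) as [i Hi].
    { exists (fun y => dd N 0 y < / 4). split; auto. split; auto. rewrite dd_refl. lra. }
    destruct HN as [Hpos Hr]. destruct (Hr i) as [r [Er Hr']].
    assert (HN : GoodSeq N) by (split; auto).
    set (a := (r / 2)%Z).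
    assert (Ha : (2 * a <= r <= 2 * a + 1)%Z) by (unfold a; Z.div_mod_to_equations; lia).
    specialize (Hi (N i * a)%Z ltac:(apply Z.divide_factor_l)).
    rewrite D_eq_dd0 in Hi. pose proof (D1 N (N i * a) (S i)) as Hd.
    pose proof (N_posR N HN i) as Pi.
    assert (Pr : 3 <= IZR r) by (apply IZR_le; lia).
    assert (Ha1 : 1 <= IZR a) by (apply IZR_le; lia).
    assert (Ha2 : 2 * IZR a <= IZR r <= 2 * IZR a + 1).
    { destruct Ha as [Ha Ha']. apply IZR_le in Ha. apply IZR_le in Ha'. rewrite mult_IZR in Ha.
      rewrite plus_IZR, mult_IZR in Ha'. simpl in *. lra. }
    replace (IZR (N i * a) / IZR (N (S i))) with (IZR a / IZR r) in Hd
      by (rewrite Er, !mult_IZR; field; lra).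
    rewrite nrm_small in Hd.
    + rewrite Rabs_right in Hd by (apply Rle_ge; unfold Rdiv; apply Rmult_le_pos; [lra|left; apply Rinv_0_lt_compat; lra]).
      assert (IZR a / IZR r >= / 3).
      { apply Rle_ge. apply (Rmult_le_reg_r (IZR r)). lra. field_simplify; lra. }
      lra.
    + rewrite Rabs_right by (apply Rle_ge; unfold Rdiv; apply Rmult_le_pos; [lra|left; apply Rinv_0_lt_compat; lra]).
      apply (Rmult_le_reg_r (IZR r)). lra. field_simplify; lra.
  - intro f. split.
    + intros [Hf Hc]. split; auto.
      destruct (Hc 0%Z (/ 4) ltac:(lra)) as [U [HU [U0 HUf]]].
      destruct (HU 0%Z U0) as [delta [Hdel Hball]].
      assert (Hcont : forall m, D N m < delta -> nrm (IZR m * f 1%Z) < / 4).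
      { intros m Hm. rewrite <- D_eq_dd0 in Hm. apply Hball in Hm. apply HUf in Hm.
        apply nrm_ltP in Hm. pose proof (hom_diff f Hf 0%Z m) as Hz. rewrite Z.sub_0_r in Hz.
        replace (IZR m * f 1%Z) with ((f m - f 0%Z) - (f m - f 0%Z - IZR m * f 1%Z)) by ring.
        rewrite nrm_shift' by auto. auto. }
      destruct (dual_key N HN (f 1%Z) delta Hdel Hcont) as [i Hi].
      intros x eps Heps. destruct (Nn i) as [W0 [HW0 [W00 HW0d]]].
      exists (fun y => W0 (y - x)%Z). split. apply trans_open; auto. split. rewrite Z.sub_diag; auto.
      intros y Hy. apply HW0d in Hy. destruct Hy as [q Hq].
      assert (isZ (f y - f x)).
      { pose proof (hom_diff f Hf x y) as Hz. rewrite Hq, mult_IZR in Hz.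
        eapply isZ_eq; [|apply (isZ_add _ _ Hz (isZ_mul _ _ (isZ_IZR q) Hi))]. ring. }
      destruct H as [k Hk]. exists k. rewrite Hk, Rminus_diag, Rabs_R0. lra.
    + intros [Hf Hc]. split; auto. intros x eps Heps. destruct (Hc x eps Heps) as [U [HU HU']].
      exists U. split; auto.
Qed.

Open Scope Z_scope.

Lemma pow_pos' p n : 1 < p -> 0 < p ^ Z.of_nat n.
Proof. intro. apply Z.pow_pos_nonneg; lia. Qed.

Lemma padic_props p : prime p ->
  is_group_topology (padic_top p) /\ hausdorff (padic_top p) /\
  linear_top (padic_top p) /\ non_discrete (padic_top p).
Proof.
  intro Hp. pose proof (prime_ge_2 p Hp) as Hp2.
  assert (Coset : forall x n, padic_top p (fun u => exists k, u = x + k * p ^ Z.of_nat n)).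
  { intros x n u [k ->]. exists n. intro k'. exists (k + k'). ring. }
  split; [split; [split; [|split]|]|split; [|split]].
  - intros x _. exists 0%nat. auto.
  - intros I F HF x [i Hi]. destruct (HF i x Hi) as [n Hn]. exists n. intro k. exists i. auto.
  - intros U V HU HV x [Ux Vx]. destruct (HU x Ux) as [n1 H1]. destruct (HV x Vx) as [n2 H2].
    exists (n1 + n2)%nat. intro k. rewrite Nat2Z.inj_add, Z.pow_add_r by lia. split.
    + replace (k * (p ^ Z.of_nat n1 * p ^ Z.of_nat n2)) with ((k * p ^ Z.of_nat n2) * p ^ Z.of_nat n1) by ring. auto.
    + replace (k * (p ^ Z.of_nat n1 * p ^ Z.of_nat n2)) with ((k * p ^ Z.of_nat n1) * p ^ Z.of_nat n2) by ring. auto.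
  - intros x y W HW Wxy. destruct (HW _ Wxy) as [n Hn].
    exists (fun u => exists k, u = x + k * p ^ Z.of_nat n), (fun u => exists k, u = y + k * p ^ Z.of_nat n).
    split. apply Coset. split. apply Coset. split. exists 0. ring. split. exists 0. ring.
    intros u v [k ->] [k' ->]. replace (x + k * p ^ Z.of_nat n - (y + k' * p ^ Z.of_nat n))
      with (x - y + (k - k') * p ^ Z.of_nat n) by ring. auto.
  - intros x y Hxy. set (n := Z.to_nat (Z.abs (x - y))).
    assert (Hb : Z.abs (x - y) < p ^ Z.of_nat n).
    { unfold n. rewrite Z2Nat.id by lia. apply Z.pow_gt_lin_r; lia. }
    exists (fun u => exists k, u = x + k * p ^ Z.of_nat n), (fun u => exists k, u = y + k * p ^ Z.of_nat n).
    split. apply Coset. split. apply Coset. split. exists 0. ring. split. exists 0. ring.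
    intros z [k Hk] [k' Hk']. assert (E : x - y = (k' - k) * p ^ Z.of_nat n) by lia.
    pose proof (pow_pos' p n ltac:(lia)). assert (k' - k <> 0) by (intro; nia). nia.
  - intros U [V [HV [V0 VU]]]. destruct (HV 0 V0) as [n Hn].
    exists (fun z => (p ^ Z.of_nat n | z)). split; [split|split].
    + apply Z.divide_0_r.
    + intros a b Ha Hb. apply Z.divide_sub_r; auto.
    + exists (fun z => (p ^ Z.of_nat n | z)). split.
      * intros z [q ->]. exists n. intro k. exists (q + k). ring.
      * split. apply Z.divide_0_r. auto.
    + intros z [q ->]. apply VU. specialize (Hn q). rewrite Z.add_0_l in Hn. auto.
  - intro H. destruct (H 0 eq_refl) as [n Hn]. specialize (Hn 1).
    pose proof (pow_pos' p n ltac:(lia)). lia.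
Qed.

Lemma not_mackey_of l : (exists t : topZ,
        is_group_topology t /\ metrizable t /\ loc_quasi_convex t /\
        hausdorff t /\ strictly_finer t l /\ same_dual t l) -> ~ mackey l.
Proof.
  intros [t [Hg [_ [Hq [_ [[Hf [U [HtU HlU]]] Hd]]]]]] [Hl Hm].
  apply HlU. apply (Hm t). split. split; auto. split; auto. auto.
Qed.

Theorem theorem4p6 :
  (forall l : topZ,
     is_group_topology l -> hausdorff l -> linear_top l -> non_discrete l ->
     (exists t : topZ,
        is_group_topology t /\ metrizable t /\ loc_quasi_convex t /\
        hausdorff t /\ strictly_finer t l /\ same_dual t l) /\
     ~ mackey l) /\
  (forall p : Z, prime p -> ~ mackey (padic_top p)).
Proof.
  split.
  - intros l Hg Hh Hl Hnd. pose proof (part1 l Hg Hh Hl Hnd). split; auto. apply not_mackey_of; auto.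
  - intros p Hp. destruct (padic_props p Hp) as [Hg [Hh [Hl Hnd]]]. apply not_mackey_of. apply part1; auto.
Qed.
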